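(* Consider the sample version of the stable PC-like algorithm (SPC4LWF), in which each conditional independence query ''$u\perp\!\!\!\perp v\mid S$'' is answered by a fixed (possibly erroneous, e.g. estimated from data by statistical tests) deterministic rule depending only on $(u,v,S)$, with the answer symmetric in $u$ and $v$. Then the skeleton (the undirected graph $H$ obtained at the end of the skeleton recovery phase) is the same for every ordering $\mathrm{order}(V)$ of the variables.
   Context: Let $V$ be a finite set of variables. Skeleton recovery phase of SPC4LWF with an ordering $\mathrm{order}(V)$: let $H$ be the complete undirected graph on $V$. For $i=0,1,\dots,|V|-2$: first, for every vertex $x$, store $a_H(x)$ := the current set of vertices adjacent to $x$ in $H$; then, while possible, select (in an order determined by $\mathrm{order}(V)$) an ordered pair $(u,v)$ with $u\in a_H(v)$, $u,v$ still adjacent in $H$, and $|a_H(u)\setminus\{v\}|\ge i$; if there is $S\subseteq a_H(u)\setminus\{v\}$ with $|S|=i$ for which the query $u\perp\!\!\!\perp v\mid S$ is answered ''independent'', set $S_{uv}=S_{vu}=S$ and remove the edge $u-v$ from $H$. The stored sets $a_H$ are not updated within a level $i$; they are recomputed only at the start of the next level. *)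

(* Defs.v *)
From mathcomp Require Import all_boot.
Set Implicit Arguments. Unset Strict Implicit. Unset Printing Implicit Defensive.

(* An undirected graph on V is represented by its symmetric set of ordered
   pairs (u,v) such that u - v is an edge. *)

Section SPC.
Variable V : finType.

Definition complete_graph : {set V * V} := [set p | p.1 != p.2].

Definition adj (E : {set V * V}) (x : V) : {set V} := [set y | (x, y) \in E].

Definition remove_edge (E : {set V * V}) (u v : V) : {set V * V} :=
  E :\ (u, v) :\ (v, u).

(* CI oracle: [ci u v S = true] means "u _||_ v | S" is answered independent *)
Variable ci : V -> V -> {set V} -> bool.

(* processing the selected ordered pair (u,v) at level i, with the stored
   (frozen) adjacency sets a *)
Definition spc_step (i : nat) (a : V -> {set V}) (E : {set V * V})
    (p : V * V) : {set V * V} :=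
  let: (u, v) := p in
  if [&& u \in a v, (u, v) \in E, i <= #|a u :\ v|
       & [exists S : {set V}, [&& S \subset a u :\ v, #|S| == i & ci u v S]]]
  then remove_edge E u v else E.

Definition spc_level (ps : seq (V * V)) (E : {set V * V}) (i : nat)
    : {set V * V} :=
  let a := adj E in foldl (spc_step i a) E ps.

Definition spc_skeleton (ps : seq (V * V)) : {set V * V} :=
  foldl (spc_level ps) complete_graph (iota 0 #|V|.-1).

End SPC.

Definition is_ordering (V : finType) (o : seq V) : Prop := perm_eq o (enum V).

Definition pair_selection_rule (V : finType) (sel : seq V -> seq (V * V)) : Prop :=
  forall o, is_ordering o ->
    perm_eq (sel o) (enum [set p : V * V | p.1 != p.2]).

(* Main.v *)
Require Import Defs.
From mathcomp Require Import all_boot.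
Set Implicit Arguments. Unset Strict Implicit. Unset Printing Implicit Defensive.

Section Aux.
Variable V : finType.
Variable ci : V -> V -> {set V} -> bool.

Definition symE (E : {set V * V}) := forall u v, ((u,v) \in E) = ((v,u) \in E).

Definition cond i (a : V -> {set V}) (p : V * V) :=
  [&& p.1 \in a p.2, i <= #|a p.1 :\ p.2|
   & [exists S : {set V}, [&& S \subset a p.1 :\ p.2, #|S| == i & ci p.1 p.2 S]]].

Definition Rm i a (ps : seq (V * V)) : {set V * V} :=
  [set p | has (fun q => cond i a q && ((p == q) || (p == (q.2, q.1)))) ps].

Lemma step_eq i a E p : spc_step ci i a E p =
  if cond i a p && (p \in E) then remove_edge E p.1 p.2 else E.
Proof.
case: p => u v; rewrite /spc_step /cond /=.
by case: (u \in a v); case: ((u,v) \in E); case: (i <= _); case: [exists _, _].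
Qed.

Lemma sym_remove E u v : symE E -> symE (remove_edge E u v).
Proof.
move=> sE x y; rewrite /remove_edge !inE !xpair_eqE sE.
by case: (x == u); case: (y == v); case: (x == v); case: (y == u).
Qed.

Lemma level_closed i a ps E : symE E ->
  foldl (spc_step ci i a) E ps = E :\: Rm i a ps.
Proof.
elim: ps E => [|q ps IH] E sE /=.
  by apply/setP => p; rewrite !inE.
have sE' : symE (spc_step ci i a E q).
  by rewrite step_eq; case: ifP => // _; apply: sym_remove.
rewrite IH // step_eq; clear sE' IH.
case: q => u v; apply/setP => -[x y]; rewrite /Rm /remove_edge.
rewrite [in RHS]in_setD [in RHS]inE /=.
case: (cond i a (u, v)) => /=; last first.
  by rewrite in_setD inE.
case: ifP => Hin.
  rewrite !inE !xpair_eqE.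
  by case: (x == u); case: (y == v); case: (x == v); case: (y == u);
     case: has; case: ((x, y) \in E).
rewrite in_setD inE !xpair_eqE.
have Hin' : ((v, u) \in E) = false by rewrite sE.
have HB : ((x == u) && (y == v) || (x == v) && (y == u)) -> ((x, y) \in E) = false.
  by case/orP => /andP[/eqP-> /eqP->].
move: HB; case: (_ || _); case: ((x, y) \in E); case: has => //= H.
by have := H isT.
Qed.

Lemma Rm_perm i a ps1 ps2 : perm_eq ps1 ps2 -> Rm i a ps1 = Rm i a ps2.
Proof.
move=> Hp; apply/setP => p; rewrite !inE.
by apply: eq_has_r; apply: perm_mem.
Qed.

Lemma sym_level ps E i : symE E -> symE (spc_level ci ps E i).
Proof.
move=> sE; rewrite /spc_level level_closed // => x y.
rewrite !inE sE; congr (_ && _); congr negb.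
apply: eq_has => q; case: q => u v /=; rewrite !xpair_eqE.
by case: (x == u); case: (y == v); case: (x == v); case: (y == u); rewrite ?andbF ?orbF.
Qed.

Lemma fold_levels ps1 ps2 l E : perm_eq ps1 ps2 -> symE E ->
  foldl (spc_level ci ps1) E l = foldl (spc_level ci ps2) E l.
Proof.
move=> Hp; elim: l E => [|i l IH] E sE //=.
have -> : spc_level ci ps1 E i = spc_level ci ps2 E i.
  by rewrite /spc_level !level_closed // (Rm_perm _ _ Hp).
by apply: IH; apply: sym_level.
Qed.
End Aux.

Theorem theorem2 (V : finType) (ci : V -> V -> {set V} -> bool)
    (ci_sym : forall (u v : V) (S : {set V}), ci u v S = ci v u S)
    (sel : seq V -> seq (V * V)) (Hsel : pair_selection_rule sel)
    (o1 o2 : seq V) (Ho1 : is_ordering o1) (Ho2 : is_ordering o2) :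
  spc_skeleton ci (sel o1) = spc_skeleton ci (sel o2).
Proof.
rewrite /spc_skeleton; apply: fold_levels.
  by apply: perm_trans (Hsel _ Ho1) _; rewrite perm_sym; apply: Hsel.
by move=> u v; rewrite /complete_graph !inE /= eq_sym.
Qed.
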